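(* Let $\mathcal M_1=\langle W_1,\le_1,v_1,D_1,\phi_1\rangle$ and $\mathcal M_2=\langle W_2,\le_2,v_2,D_2,\phi_2\rangle$ be G-models for the same relational language, and let $Z$ be a CD-asimulation between $\mathcal M_1$ and $\mathcal M_2$. Let $A[x_1,\dots,x_k]$ be a formula whose free variables are among $x_1,\dots,x_k$, let $\{i,j\}=\{1,2\}$, $t\in W_i$, $\vec d\in D_i^k$, $u\in W_j$, $\vec e\in D_j^k$. If $(t,\vec d)\,Z\,(u,\vec e)$ and $t\Vdash_i A[\vec d]$, then $u\Vdash_j A[\vec e]$.
   Context: Formulas are built from atomic formulas $P x_{l_1}\dots x_{l_m}$ with $\wedge,\vee,\rightarrow,\perp,\forall,\exists$. A G-model is $\mathcal{M}=\langle W,\le,v_0,D,\phi\rangle$: $W$ a nonempty set of states, $\le$ a reflexive transitive relation on $W$, $v_0\in W$ with $v_0\le v$ for all $v\in W$, $D$ a nonempty domain, and for each $k$-ary predicate symbol $P$ a set $\phi(P)\subseteq W\times D^k$ that is monotone: if $v\le w$ and $\langle v,a_1,\dots,a_k\rangle\in\phi(P)$ then $\langle w,a_1,\dots,a_k\rangle\in\phi(P)$. Forcing $\Vdash$ between states and sentences with constants for elements of $D$: atomic $P\mathbf a_1\dots\mathbf a_k$ forced at $v$ iff $\langle v,a_1,\dots,a_k\rangle\in\phi(P)$; $\wedge,\vee$ pointwise; $v\Vdash A\rightarrow B$ iff for all $w\ge v$, $w\Vdash A$ implies $w\Vdash B$; $\perp$ never forced; $\exists x A$ (resp. $\forall xA$)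 forced at $v$ iff $A[\mathbf a/x]$ is forced at $v$ for some (resp. every) $a\in D$. $A[\vec d]$ denotes $A$ with $x_l$ replaced by the constant for $d_l$; $\Vdash_i$ is forcing in $\mathcal M_i$. A CD-asimulation between $\mathcal M_1$ and $\mathcal M_2$ is a relation $Z\subseteq\bigcup_{k\ge0}[(W_1\times D_1^k)\times(W_2\times D_2^k)]\cup[(W_2\times D_2^k)\times(W_1\times D_1^k)]$ such that for all $\{i,j\}=\{1,2\}$: (1) if $(v,\vec d)Z(w,\vec e)$ with $v\in W_i$, and $v\Vdash_i P[\vec d]$ for an atomic formula $P[\vec x]$ with free variables among $x_1,\dots,x_k$, then $w\Vdash_j P[\vec e]$; (2) if $(t,\vec d)Z(u,\vec e)$ with $t\in W_i$, $u\in W_j$, and $u\le_j v$, then there is $w\in W_i$ with $t\le_i w$, $(w,\vec d)Z(v,\vec e)$ and $(v,\vec e)Z(w,\vec d)$; (3) if $t\in W_i$, $(t,\vec d)Z(u,\vec e)$ and $f\in D_i$, then there is $g\in D_j$ with $(t,\vec d f)Z(u,\vec e g)$; (4) if $t\in W_i$, $(t,\vec d)Z(u,\vec e)$ and $g\in D_j$, then there is $f\in D_i$ with $(t,\vec d f)Z(u,\vec e g)$. Here $\vec d f$ denotes the sequence $\vec d$ extended by $f$. *)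

(* Defs.v *)
From mathcomp Require Import all_boot.
Set Implicit Arguments. Unset Strict Implicit. Unset Printing Implicit Defensive.

Record Lang := { Pred : Type; arity : Pred -> nat }.

(* Formulas; variable x_l is represented by the index l : nat. *)
Inductive formula (L : Lang) : Type :=
| FAtom : forall P : Pred L, (arity P).-tuple nat -> formula L
| FAnd : formula L -> formula L -> formula L
| FOr : formula L -> formula L -> formula L
| FImp : formula L -> formula L -> formula L
| FBot : formula L
| FAll : nat -> formula L -> formula L
| FEx : nat -> formula L -> formula L.

Fixpoint free_in (L : Lang) (m : nat) (A : formula L) : Prop :=
  match A with
  | FAtom _ ls => m \in (tval ls)
  | FAnd A B | FOr A B | FImp A B => free_in m A \/ free_in m B
  | FBot => False
  | FAll l A | FEx l A => m <> l /\ free_in m A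
  end.

Unset Implicit Arguments.
Record GModel (L : Lang) := {
  W : Type;
  le : W -> W -> Prop;
  le_refl : forall v, le v v;
  le_trans : forall u v w, le u v -> le v w -> le u w;
  root : W;
  root_le : forall v, le root v;
  D : Type;
  d0 : D;  (* D is nonempty *)
  phi : forall P : Pred L, W -> (arity P).-tuple D -> Prop;
  phi_mono : forall (P : Pred L) (v w : W) (a : (arity P).-tuple D),
      le v w -> phi P v a -> phi P w a
}.
Set Implicit Arguments.
Arguments le {L} g _ _.
Arguments root {L} g.
Arguments d0 {L} g.
Arguments phi {L} g P _ _.
Arguments W {L} g.
Arguments D {L} g.

Definition upd (T : Type) (rho : nat -> T) (l : nat) (a : T) : nat -> T :=
  fun m => if m == l then a else rho m.

(* Forcing, relative to an assignment rho of domain elements to variables;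
   forcing of A[d_0,...,d_{k-1}] is forcing of A under the assignment x_l |-> d_l. *)
Fixpoint forces (L : Lang) (M : GModel L) (v : W M) (rho : nat -> D M)
    (A : formula L) {struct A} : Prop :=
  match A with
  | FAtom P ls => phi M P v (map_tuple rho ls)
  | FAnd A B => forces v rho A /\ forces v rho B
  | FOr A B => forces v rho A \/ forces v rho B
  | FImp A B => forall w, le M v w -> forces w rho A -> forces w rho B
  | FBot => False
  | FAll l A => forall a : D M, forces v (upd rho l a) A
  | FEx l A => exists a : D M, forces v (upd rho l a) A
  end.

Definition valu (L : Lang) (M : GModel L) (ds : seq (D M)) : nat -> D M :=
  fun l => nth (d0 M) ds l.

(* One direction (i -> j) of the CD-asimulation conditions.  The relation Z is
   given by its two parts: Zij (pairs from W_i x D_i^k to W_j x D_j^k) and Zji. *)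
Definition asim_dir (L : Lang) (Mi Mj : GModel L)
    (Zij : W Mi -> seq (D Mi) -> W Mj -> seq (D Mj) -> Prop)
    (Zji : W Mj -> seq (D Mj) -> W Mi -> seq (D Mi) -> Prop) : Prop :=
  (forall t d u e, Zij t d u e -> size d = size e) /\
  (forall v d w e (P : Pred L) (ls : (arity P).-tuple nat),
      Zij v d w e -> (forall m, free_in m (FAtom ls) -> m < size d) ->
      forces v (valu d) (FAtom ls) -> forces w (valu e) (FAtom ls)) /\
  (forall t d u e v, Zij t d u e -> le Mj u v ->
      exists w, le Mi t w /\ Zij w d v e /\ Zji v e w d) /\
  (forall t d u e (f : D Mi), Zij t d u e ->
      exists g : D Mj, Zij t (rcons d f) u (rcons e g)) /\
  (forall t d u e (g : D Mj), Zij t d u e ->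
      exists f : D Mi, Zij t (rcons d f) u (rcons e g)).

Definition CD_asim (L : Lang) (M1 M2 : GModel L)
    (Z12 : W M1 -> seq (D M1) -> W M2 -> seq (D M2) -> Prop)
    (Z21 : W M2 -> seq (D M2) -> W M1 -> seq (D M1) -> Prop) : Prop :=
  asim_dir Z12 Z21 /\ asim_dir Z21 Z12.

(* Main.v *)
Require Import Defs.
From mathcomp Require Import all_boot.
From Stdlib Require Import Setoid.

Lemma forces_ext (L : Lang) (M : GModel L) (A : formula L) :
  forall (v : W M) (rho rho' : nat -> D M),
  (forall m, free_in m A -> rho m = rho' m) ->
  (forces v rho A <-> forces v rho' A).
Proof.
elim: A => [P ls|A IHA B IHB|A IHA B IHB|A IHA B IHB||l A IHA|l A IHA] v rho rho' H /=.
- have -> : map_tuple rho ls = map_tuple rho' ls.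
    apply: val_inj => /=; apply/eq_in_map => m Hm; exact: H.
  by [].
- rewrite (IHA v rho rho'); [rewrite (IHB v rho rho'); [reflexivity|]|];
    by move=> m Hm; apply: H => /=; tauto.
- rewrite (IHA v rho rho'); [rewrite (IHB v rho rho'); [reflexivity|]|];
    by move=> m Hm; apply: H => /=; tauto.
- split=> Hf w Hw.
  + rewrite -(IHA w rho rho') -?(IHB w rho rho'); [exact: Hf| |];
      by move=> m Hm; apply: H => /=; tauto.
  + rewrite (IHA w rho rho') ?(IHB w rho rho'); [exact: Hf| |];
      by move=> m Hm; apply: H => /=; tauto.
- by [].
- have E : forall a, forces v (upd rho l a) A <-> forces v (upd rho' l a) A.
    move=> a; apply: IHA => m Hm; rewrite /upd; case: eqP => // /eqP Hne.
    apply: H; split => //; by apply/eqP.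
  by split=> Hf a; apply/E.
- have E : forall a, forces v (upd rho l a) A <-> forces v (upd rho' l a) A.
    move=> a; apply: IHA => m Hm; rewrite /upd; case: eqP => // /eqP Hne.
    apply: H; split => //; by apply/eqP.
  by split=> [[a Ha]|[a Ha]]; exists a; apply/E.
Qed.

Arguments forces_ext {L M A} v rho rho'.

Definition dirP (L : Lang) (Mi Mj : GModel L)
    (Zij : W Mi -> seq (D Mi) -> W Mj -> seq (D Mj) -> Prop) (A : formula L) :=
  forall t d u e (s : nat -> nat), (forall m, free_in m A -> s m < size d) ->
  Zij t d u e -> forces t (fun m => valu d (s m)) A -> forces u (fun m => valu e (s m)) A.

Arguments dirP {L Mi Mj}.

Lemma shift_agree (L : Lang) (M : GModel L) (A : formula L) l (s : nat -> nat)
    (d : seq (D M)) (f : D M) :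
  (forall m, m <> l /\ free_in m A -> s m < size d) ->
  (forall m, free_in m A ->
     upd (fun m => valu d (s m)) l f m = valu (rcons d f) (upd s l (size d) m)) /\
  (forall m, free_in m A -> upd s l (size d) m < size (rcons d f)).
Proof.
move=> Hs; split=> m Hm; rewrite /upd /valu; case: eqP => [_|/eqP Hne].
- by rewrite nth_rcons ltnn eqxx.
- have Hl : s m < size d by apply: Hs; split => //; apply/eqP.
  by rewrite nth_rcons Hl.
- by rewrite size_rcons.
- rewrite size_rcons; apply: leqW; apply: Hs; split => //; exact/eqP.
Qed.

Arguments shift_agree {L M A l s d} f.

Lemma main_gen (L : Lang) (Mi Mj : GModel L)
    (Zij : W Mi -> seq (D Mi) -> W Mj -> seq (D Mj) -> Prop)
    (Zji : W Mj -> seq (D Mj) -> W Mi -> seq (D Mi) -> Prop) :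
  asim_dir Zij Zji -> asim_dir Zji Zij ->
  forall A, dirP Zij A /\ dirP Zji A.
Proof.
move=> H1 H2 A; elim: A => [P ls|A IHA B IHB|A IHA B IHB|A IHA B IHB||l A IHA|l A IHA].
- have gen : forall (Mi Mj : GModel L) Zij Zji, asim_dir Zij Zji -> @dirP L Mi Mj Zij (FAtom ls).
    move=> Ma Mb Za Zb [Hsz [Hat _]] t d u e s Hs HZ /=.
    have E : forall (M : GModel L) (d : seq (D M)),
        map_tuple (fun m => valu d (s m)) ls = map_tuple (valu d) (map_tuple s ls).
      by move=> M d'; apply: val_inj => /=; rewrite -map_comp.
    rewrite !E => Hf.
    have := Hat t d u e P (map_tuple s ls) HZ; apply => //.
    move=> m /= /mapP [x Hx ->]; exact: Hs.
  by split; [exact: (gen _ _ _ _ H1) | exact: (gen _ _ _ _ H2)].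
- case: IHA => [IA1 IA2]; case: IHB => [IB1 IB2].
  split=> t d u e s Hs HZ [Ha Hb]; split.
  + by apply: (IA1 t d) => // m Hm; apply: Hs; left.
  + by apply: (IB1 t d) => // m Hm; apply: Hs; right.
  + by apply: (IA2 t d) => // m Hm; apply: Hs; left.
  + by apply: (IB2 t d) => // m Hm; apply: Hs; right.
- case: IHA => [IA1 IA2]; case: IHB => [IB1 IB2].
  split=> t d u e s Hs HZ [Ha|Hb].
  + by left; apply: (IA1 t d) => // m Hm; apply: Hs; left.
  + by right; apply: (IB1 t d) => // m Hm; apply: Hs; right.
  + by left; apply: (IA2 t d) => // m Hm; apply: Hs; left.
  + by right; apply: (IB2 t d) => // m Hm; apply: Hs; right.
- case: IHA => [IA1 IA2]; case: IHB => [IB1 IB2].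
  have HsA : forall (T : Type) s (d : seq T), (forall m, free_in m (FImp A B) -> s m < size d) ->
     forall m, free_in m A -> s m < size d by move=> T s d Hs m Hm; apply: Hs; left.
  have HsB : forall (T : Type) s (d : seq T), (forall m, free_in m (FImp A B) -> s m < size d) ->
     forall m, free_in m B -> s m < size d by move=> T s d Hs m Hm; apply: Hs; right.
  split=> t d u e s Hs HZ /= Hf v Huv Hv.
  + case: H1 => [Hsz [_ [Hb _]]].
    have [w [Htw [Z1 Z2]]] := Hb t d u e v HZ Huv.
    have Hsz' : size d = size e := Hsz _ _ _ _ HZ.
    apply: (IB1 w d v e s (HsB _ s d Hs) Z1).
    apply: Hf => //; apply: (IA2 v e w d s) => //.
    by rewrite -Hsz'; apply: (HsA _ s d Hs).
  + case: H2 => [Hsz [_ [Hb _]]].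
    have [w [Htw [Z1 Z2]]] := Hb t d u e v HZ Huv.
    have Hsz' : size d = size e := Hsz _ _ _ _ HZ.
    apply: (IB2 w d v e s (HsB _ s d Hs) Z1).
    apply: Hf => //; apply: (IA1 v e w d s) => //.
    by rewrite -Hsz'; apply: (HsA _ s d Hs).
- by split.
- case: IHA => [IA1 IA2].
  have gen : forall (Ma Mb : GModel L) Za Zb, asim_dir Za Zb -> @dirP L Ma Mb Za A ->
      @dirP L Ma Mb Za (FAll l A).
    move=> Ma Mb Za Zb [Hsz [_ [_ [_ H4]]]] IA t d u e s Hs HZ /= Hf g.
    have [f HZ'] := H4 t d u e g HZ.
    have Hsz' : size d = size e := Hsz _ _ _ _ HZ.
    have Hs' : forall m, m <> l /\ free_in m A -> s m < size d by move=> m Hm; apply: Hs.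
    have Hse : forall m, m <> l /\ free_in m A -> s m < size e
      by move=> m Hm; rewrite -Hsz'; apply: Hs'.
    have [Ag Sg] := shift_agree g Hse.
    have [Af Sf] := shift_agree f Hs'.
    apply/(forces_ext u (upd (fun m => valu e (s m)) l g)
            (fun m => valu (rcons e g) (upd s l (size d) m))).
      by move=> m Hm; rewrite Ag // Hsz'.
    apply: (IA t (rcons d f) u (rcons e g)) => //.
    apply/(forces_ext t (upd (fun m => valu d (s m)) l f)); last exact: Hf.
    exact: Af.
  by split; [apply: (gen _ _ _ _ H1) | apply: (gen _ _ _ _ H2)].
- case: IHA => [IA1 IA2].
  have gen : forall (Ma Mb : GModel L) Za Zb, asim_dir Za Zb -> @dirP L Ma Mb Za A ->
      @dirP L Ma Mb Za (FEx l A).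
    move=> Ma Mb Za Zb [Hsz [_ [_ [H3 _]]]] IA t d u e s Hs HZ /= [f Hf].
    have [g HZ'] := H3 t d u e f HZ.
    have Hsz' : size d = size e := Hsz _ _ _ _ HZ.
    have Hs' : forall m, m <> l /\ free_in m A -> s m < size d by move=> m Hm; apply: Hs.
    have Hse : forall m, m <> l /\ free_in m A -> s m < size e
      by move=> m Hm; rewrite -Hsz'; apply: Hs'.
    have [Ag Sg] := shift_agree g Hse.
    have [Af Sf] := shift_agree f Hs'.
    exists g.
    apply/(forces_ext u (upd (fun m => valu e (s m)) l g)
            (fun m => valu (rcons e g) (upd s l (size d) m))).
      by move=> m Hm; rewrite Ag // Hsz'.
    apply: (IA t (rcons d f) u (rcons e g)) => //.
    apply/(forces_ext t (upd (fun m => valu d (s m)) l f)); last exact: Hf.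
    exact: Af.
  by split; [apply: (gen _ _ _ _ H1) | apply: (gen _ _ _ _ H2)].
Qed.

Arguments main_gen {L Mi Mj Zij Zji}.

Theorem lemma4p1 (L : Lang) (M1 M2 : GModel L)
    (Z12 : W M1 -> seq (D M1) -> W M2 -> seq (D M2) -> Prop)
    (Z21 : W M2 -> seq (D M2) -> W M1 -> seq (D M1) -> Prop) :
  CD_asim Z12 Z21 ->
  (forall (A : formula L) (k : nat) (t : W M1) (d : seq (D M1))
          (u : W M2) (e : seq (D M2)),
     (forall m, free_in m A -> m < k) -> size d = k -> size e = k ->
     Z12 t d u e -> forces t (valu d) A -> forces u (valu e) A) /\
  (forall (A : formula L) (k : nat) (t : W M2) (d : seq (D M2))
          (u : W M1) (e : seq (D M1)),
     (forall m, free_in m A -> m < k) -> size d = k -> size e = k ->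
     Z21 t d u e -> forces t (valu d) A -> forces u (valu e) A).
Proof.
case=> H1 H2; split=> A k t d u e Hk Hd He HZ Hf;
  have [P1 P2] := main_gen H1 H2 A.
- apply: (P1 t d u e id) => //; by rewrite Hd.
- apply: (P2 t d u e id) => //; by rewrite Hd.
Qed.
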